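(* Let $G$ be $\mathbb{T}$ or $\mathbb{O}$, and let $R_{ij},R_{ji},R_i,R_j\in SO(3)$ satisfy $$\{R_{ij}^T g R_{ji} : g\in G\}=\{R_i^T g R_j : g\in G\}.$$ Then $$\{\pm R_{ij}^Te_{kl}R_{ji}\}_{k,l=1}^3=\{\pm (v_i^{(k)})^Tv_j^{(l)}\}_{k,l=1}^3,$$ where $v_i^{(k)}$ is the $k$-th row of $R_i$ and $v_j^{(l)}$ is the $l$-th row of $R_j$.
   Context: In the fixed coordinate system, $\mathbb{O}$ is the group of all $3\times3$ signed permutation matrices (exactly one nonzero entry, equal to $\pm1$, in each row and column) of determinant $1$, and $\mathbb{T}\subset\mathbb{O}$ is the 12-element subgroup of matrices $DP$ with $P$ the permutation matrix of an even permutation of $\{1,2,3\}$ and $D$ diagonal with entries $\pm1$, $\det D=1$. For $k,l\in\{1,2,3\}$, $e_{kl}\in\mathbb{R}^{3\times3}$ is the single-entry matrix with $(k,l)$ entry $1$ and all other entries $0$. Rows are treated as $1\times3$ row vectors, so $(v_i^{(k)})^Tv_j^{(l)}$ is a $3\times3$ rank-one matrix. The notation $\{\pm M_{kl}\}_{k,l=1}^3$ denotes the set $\{M_{kl}\}_{k,l}\cup\{-M_{kl}\}_{k,l}$. *)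

(* Defs.v *)
From mathcomp Require Import all_boot all_order all_algebra all_fingroup.
Set Implicit Arguments. Unset Strict Implicit. Unset Printing Implicit Defensive.
Import Order.TTheory GRing.Theory Num.Theory.
Local Open Scope ring_scope.

Section Defs.
Variable R : realFieldType.

Definition SO3 (A : 'M[R]_3) : Prop := A^T *m A = 1%:M /\ \det A = 1.

Definition signed_perm_mx (A : 'M[R]_3) : Prop :=
  (forall i j, A i j = 0 \/ A i j = 1 \/ A i j = -1) /\
  (forall i : 'I_3, #|[set j : 'I_3 | A i j != 0]| = 1%N) /\
  (forall j : 'I_3, #|[set i : 'I_3 | A i j != 0]| = 1%N).

Definition octa_group (A : 'M[R]_3) : Prop := signed_perm_mx A /\ \det A = 1.

Definition tetra_group (A : 'M[R]_3) : Prop :=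
  exists (s : 'S_3) (d : 'rV[R]_3),
    ~~ odd_perm s /\ (forall k, d 0 k = 1 \/ d 0 k = -1) /\
    \det (diag_mx d) = 1 /\ A = diag_mx d *m perm_mx s.
End Defs.

(* Main.v *)
Require Import Defs.
From mathcomp Require Import all_boot all_order all_algebra all_fingroup.
From mathcomp Require Import ring lra.
Import Order.TTheory GRing.Theory Num.Theory.
Local Open Scope ring_scope.
Set Implicit Arguments. Unset Strict Implicit. Unset Printing Implicit Defensive.

Section S.
Variable R : realFieldType.

Definition t01 (x : R) := x = 0 \/ x = 1 \/ x = -1.

Lemma ord3 (i : 'I_3) : i = 0 \/ i = 1 \/ i = 2%:R.
Proof. case: i => [[|[|[|m]]] Hm]; try by [left; apply/val_inj | right; left; apply/val_inj | right; right; apply/val_inj]. Qed.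

Lemma perm_mxE' (s : 'S_3) i j : (perm_mx s : 'M[R]_3) i j = (s i == j)%:R.
Proof. by rewrite perm_mxEsub !mxE. Qed.

Lemma tetra_octa (g : 'M[R]_3) : tetra_group g -> octa_group g.
Proof.
case=> s [d [ev [hd [dd ->]]]].
have E : forall i j, (diag_mx d *m perm_mx s) i j = d 0 i * (s i == j)%:R.
  by move=> i j; rewrite mul_diag_mx mxE perm_mxE'.
split; last by rewrite det_mulmx dd det_perm (negbTE ev) expr0 mulr1.
split; [|split].
- move=> i j; rewrite E; case: (s i == j) => /=; rewrite ?mulr1 ?mulr0; last by left.
  by case: (hd i) => ->; auto.
- move=> i; apply/eqP/cards1P; exists (s i); apply/setP => j; rewrite !inE E.
  have : d 0 i != 0 by case: (hd i) => ->; rewrite ?oppr_eq0 oner_eq0 //=.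
  move=> dn; rewrite (eq_sym j); case: (s i == j); by rewrite ?mulr1 ?mulr0 ?eqxx.
- move=> j; apply/eqP/cards1P; exists ((s^-1)%g j); apply/setP => i; rewrite !inE E.
  have : d 0 i != 0 by case: (hd i) => ->; rewrite ?oppr_eq0 oner_eq0 //=.
  have -> : (s i == j) = (i == (s^-1)%g j).
    by apply/eqP/eqP => [<-|->]; rewrite ?permK ?permKV.
  move=> dn; case: (i == _); by rewrite ?mulr1 ?mulr0 ?eqxx.
Qed.

Definition SP (A : 'M[R]_3) :=
  (forall i j, t01 (A i j)) /\
  (forall i i' j, A i j != 0 -> A i' j != 0 -> i = i') /\
  (forall i j j', A i j != 0 -> A i j' != 0 -> j = j').

Lemma octa_SP g : octa_group g -> SP g.
Proof.
case=> [[h1 [h2 h3]] _]; split=> //; split.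
- move=> i i' j a b; move/eqP/cards1P: (h3 j) => [x hx].
  have : i \in [set i | g i j != 0] by rewrite inE.
  have : i' \in [set i | g i j != 0] by rewrite inE.
  by rewrite hx !inE => /eqP -> /eqP ->.
- move=> i j j' a b; move/eqP/cards1P: (h2 i) => [x hx].
  have : j \in [set j | g i j != 0] by rewrite inE.
  have : j' \in [set j | g i j != 0] by rewrite inE.
  by rewrite hx !inE => /eqP -> /eqP ->.
Qed.


Definition Dm (k : nat) : 'M[R]_3 := \matrix_(i, j) (if i == j then (if (i : nat) == k then 1 else -1) else 0).
Definition Cm : 'M[R]_3 := \matrix_(i, j) (if ((j : nat) == ((i : nat) + 1) %% 3)%N then 1 else 0).

Lemma quadE (Q g : 'M[R]_3) i : (Q^T *m g *m Q) i i = \sum_m \sum_n Q m i * g m n * Q n i.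
Proof.
rewrite mxE; under eq_bigr => n _ do rewrite mxE big_distrl /=.
rewrite exchange_big /=; apply: eq_bigr => m _; apply: eq_bigr => n _.
by rewrite !mxE.
Qed.


Lemma t01_eq a b : a = b -> t01 a -> t01 b.
Proof. by move=> ->. Qed.

Lemma sq0 (x : R) : x * x = 0 -> x = 0.
Proof. by move/eqP; rewrite mulf_eq0 orbb => /eqP. Qed.

Lemma sq01 (x : R) : x * x = 0 \/ x * x = 1 -> t01 x.
Proof.
case=> [/sq0 ->|h]; first by left.
have e : (x - 1) * (x + 1) = x * x - 1 by ring.
have : (x - 1) * (x + 1) == 0 by rewrite e h subrr.
rewrite mulf_eq0 subr_eq0 addr_eq0 => /orP [/eqP->|/eqP->]; rewrite /t01; auto.
Qed.

Lemma key1 (x y z : R) : x*x + y*y + z*z = 1 -> t01 (x*x - y*y - z*z) ->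
  t01 (- (x*x) + y*y - z*z) -> t01 (x*y + y*z + z*x) -> x*x = 0 \/ x*x = 1.
Proof.
move=> hs e1 e2 e4.
have a0 : 0 <= x*x by rewrite -expr2 sqr_ge0.
have b0 : 0 <= y*y by rewrite -expr2 sqr_ge0.
have c0 : 0 <= z*z by rewrite -expr2 sqr_ge0.
case: e1 => [e1|[e1|e1]]; [|right; lra|left; lra].
exfalso.
case: e2 => [e2|[e2|e2]]; [|lra|].
- have z0 : z = 0 by apply: sq0; lra.
  move: e4; rewrite z0 !mulr0 mul0r !addr0.
  have hx : x * x = 2^-1 by lra.
  have hy : y * y = 2^-1 by lra.
  have hxy : (x*y)*(x*y) = 2^-1 * 2^-1.
    have -> : (x*y)*(x*y) = (x*x)*(y*y) by ring.
    by rewrite hx hy.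
  by case=> [e|[e|e]]; rewrite e in hxy; lra.
- have y0 : y = 0 by apply: sq0; lra.
  move: e4; rewrite y0 !mulr0 mul0r !add0r.
  have hx : x * x = 2^-1 by lra.
  have hz : z * z = 2^-1 by lra.
  have hxy : (z*x)*(z*x) = 2^-1 * 2^-1.
    have -> : (z*x)*(z*x) = (x*x)*(z*z) by ring.
    by rewrite hx hz.
  by case=> [e|[e|e]]; rewrite e in hxy; lra.
Qed.



Notation i0 := (ord0 : 'I_3).
Notation i1 := (lift ord0 ord0 : 'I_3).
Notation i2 := (lift ord0 (lift ord0 ord0) : 'I_3).

Lemma ord3' (i : 'I_3) : i = i0 \/ i = i1 \/ i = i2.
Proof. case: i => [[|[|[|m]]] Hm]; try by [left; apply/val_inj | right; left; apply/val_inj | right; right; apply/val_inj]. Qed.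

Lemma colsq (Q : 'M[R]_3) i : Q^T *m Q = 1%:M ->
  Q i0 i * Q i0 i + Q i1 i * Q i1 i + Q i2 i * Q i2 i = 1.
Proof.
move/matrixP/(_ i i); rewrite !mxE eqxx mulr1n !big_ord_recl big_ord0 !mxE => <-.
by rewrite addr0 addrA.
Qed.

Lemma K (Q : 'M[R]_3) : Q^T *m Q = 1%:M ->
  (forall i, t01 ((Q^T *m Dm 0 *m Q) i i)) ->
  (forall i, t01 ((Q^T *m Dm 1 *m Q) i i)) ->
  (forall i, t01 ((Q^T *m Dm 2 *m Q) i i)) ->
  (forall i, t01 ((Q^T *m Cm *m Q) i i)) ->
  forall m i, t01 (Q m i).
Proof.
move=> hQ h0 h1 h2 hC m i.
have hs := colsq i hQ.
set x := Q i0 i in hs *; set y := Q i1 i in hs *; set z := Q i2 i in hs *.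
have e1 : t01 (x*x - y*y - z*z).
  apply: (t01_eq _ (h0 i)); rewrite quadE !big_ord_recl !big_ord0 !mxE /=.
  rewrite -/x -/y -/z; ring.
have e2 : t01 (- (x*x) + y*y - z*z).
  apply: (t01_eq _ (h1 i)); rewrite quadE !big_ord_recl !big_ord0 !mxE /=.
  rewrite -/x -/y -/z; ring.
have e3 : t01 (- (x*x) - y*y + z*z).
  apply: (t01_eq _ (h2 i)); rewrite quadE !big_ord_recl !big_ord0 !mxE /=.
  rewrite -/x -/y -/z; ring.
have e4 : t01 (x*y + y*z + z*x).
  apply: (t01_eq _ (hC i)); rewrite quadE !big_ord_recl !big_ord0 !mxE /=.
  rewrite -/x -/y -/z; ring.
case: (ord3' m) => [->|[->|->]]; apply: sq01; rewrite -/x -/y -/z; clearbody x y z.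
- exact: (key1 hs e1 e2 e4).
- apply: (@key1 y x z).
  + by rewrite -hs; ring.
  + by apply: t01_eq e2; ring.
  + by apply: t01_eq e1; ring.
  + by apply: t01_eq e4; ring.
- apply: (@key1 z x y).
  + by rewrite -hs; ring.
  + by apply: t01_eq e3; ring.
  + by apply: t01_eq e1; ring.
  + by apply: t01_eq e4; ring.
Qed.

Lemma t01M a b : t01 a -> t01 b -> t01 (a * b).
Proof.
rewrite /t01 => [[->|[->|->]]] [->|[->|->]]; rewrite ?mulr0 ?mul0r ?mulr1 ?mul1r ?mulrNN ?mulr1; auto.
Qed.

Lemma E1 (h v : 'M[R]_3) : SP h -> SP v -> forall i j, t01 ((h^T *m v) i j).
Proof.
move=> [h1 [h2 h3]] [v1 [v2 v3]] i j; rewrite mxE.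
case: (boolP [exists k, h k i != 0]) => [/existsP [k0 hk0]|/existsPn hn].
- rewrite (bigD1 k0) //= big1 ?addr0 ?mxE; first exact: t01M.
  move=> k hk; rewrite mxE; case: (eqVneq (h k i) 0) => [->|hk']; first by rewrite mul0r.
  by move: hk; rewrite (h2 _ _ _ hk' hk0) eqxx.
- rewrite big1; first by left.
  by move=> k _; rewrite mxE; move: (hn k); rewrite negbK => /eqP ->; rewrite mul0r.
Qed.

Lemma SP_tr (A : 'M[R]_3) : SP A -> SP A^T.
Proof.
move=> [a1 [a2 a3]]; split; [|split].
- by move=> i j; rewrite mxE.
- by move=> i i' j; rewrite !mxE; apply: a3.
- by move=> i j j'; rewrite !mxE; apply: a2.
Qed.

Lemma E2 (h v : 'M[R]_3) : SP h -> SP v -> forall i j, t01 ((v *m h^T) i j).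
Proof.
move=> sh sv i j.
have -> : (v *m h^T) i j = ((h^T)^T *m v^T) j i.
  by rewrite trmxK !mxE; apply: eq_bigr => k _; rewrite !mxE mulrC.
by apply: E1; apply: SP_tr.
Qed.

Lemma tetra_Dm (k : nat) : (k < 3)%N -> tetra_group (Dm k).
Proof.
move=> hk.
exists 1%g, (\row_(j < 3) (if (j : nat) == k then 1 else -1)); split; first by rewrite odd_perm1.
split; first by move=> j; rewrite mxE; case: (_ == _); auto.
split.
  rewrite det_diag !big_ord_recl big_ord0 !mxE /=.
  by case: k hk => [|[|[|k]]] //= _; ring.
rewrite perm_mx1 mulmx1; apply/matrixP => i j; rewrite !mxE.
by case: (eqVneq i j) => [->|_]; rewrite ?eqxx ?mulr1n ?mulr0n.
Qed.

Definition cyc : 'S_3 := (tperm i1 i2 * tperm i0 i1)%g.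

Lemma tetra_Cm : tetra_group Cm.
Proof.
exists cyc, (\row_(j < 3) 1); split; first by rewrite odd_permM !odd_tperm.
split; first by move=> j; rewrite mxE; auto.
split.
  by rewrite det_diag !big_ord_recl big_ord0 !mxE /=; ring.
rewrite mul_diag_mx; apply/matrixP => i j; rewrite !mxE mul1r /cyc permM /tperm !permE /=.
by case: (ord3' i) => [->|[->|->]]; case: (ord3' j) => [->|[->|->]].
Qed.

Lemma tetra_1 : tetra_group (1%:M : 'M[R]_3).
Proof.
exists 1%g, (\row_(j < 3) 1); split; first by rewrite odd_perm1.
split; first by move=> j; rewrite mxE; auto.
split.
  by rewrite det_diag !big_ord_recl big_ord0 !mxE /=; ring.
rewrite perm_mx1 mulmx1; apply/matrixP => i j; rewrite !mxE.
done.
Qed.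

Lemma G_facts (G : 'M[R]_3 -> Prop) : G = @tetra_group R \/ G = @octa_group R ->
  (G 1%:M /\ G (Dm 0) /\ G (Dm 1) /\ G (Dm 2) /\ G Cm) /\ (forall g, G g -> SP g).
Proof.
case=> ->; split.
- by split; [|split; [|split; [|split]]]; [apply: tetra_1 | apply: tetra_Dm | apply: tetra_Dm | apply: tetra_Dm | apply: tetra_Cm].
- by move=> g hg; apply: octa_SP; apply: tetra_octa.
- by split; [|split; [|split; [|split]]]; apply: tetra_octa; [apply: tetra_1 | apply: tetra_Dm | apply: tetra_Dm | apply: tetra_Dm | apply: tetra_Cm].
- exact: octa_SP.
Qed.

Lemma unitv (f : 'I_3 -> R) : (forall i, t01 (f i)) ->
  f i0 * f i0 + f i1 * f i1 + f i2 * f i2 = 1 ->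
  exists a, (f a = 1 \/ f a = -1) /\ forall i, i != a -> f i = 0.
Proof.
move=> h hs.
have P0 : forall a, (f a = 1 \/ f a = -1) -> (forall i, i != a -> f i = 0) ->
  exists a, (f a = 1 \/ f a = -1) /\ forall i, i != a -> f i = 0 by move=> a ? ?; exists a.
case: (h i0) => [e0|[e0|e0]]; case: (h i1) => [e1|[e1|e1]]; case: (h i2) => [e2|[e2|e2]];
  rewrite ?e0 ?e1 ?e2 in hs;
  first [ (exfalso; lra)
        | (apply: (P0 i0); [by rewrite ?e0 ?e1 ?e2; auto | by move=> i; case: (ord3' i) => [->|[->|->]]; rewrite ?eqxx // => _; rewrite ?e0 ?e1 ?e2])
        | (apply: (P0 i1); [by rewrite ?e0 ?e1 ?e2; auto | by move=> i; case: (ord3' i) => [->|[->|->]]; rewrite ?eqxx // => _; rewrite ?e0 ?e1 ?e2])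
        | (apply: (P0 i2); [by rewrite ?e0 ?e1 ?e2; auto | by move=> i; case: (ord3' i) => [->|[->|->]]; rewrite ?eqxx // => _; rewrite ?e0 ?e1 ?e2])
        ].
Qed.

Lemma fin (P Q : 'M[R]_3) : P^T *m P = 1%:M -> Q *m Q^T = 1%:M ->
  (forall i j, t01 (P i j)) -> (forall i j, t01 (Q i j)) ->
  forall k l, exists a b s, (s = 1 \/ s = -1) /\ P *m delta_mx k l *m Q = s *: delta_mx a b.
Proof.
move=> hP hQ tP tQ k l.
have [a [ha ha0]] := @unitv (fun i => P i k) (fun i => tP i k) (colsq k hP).
have hQ' : Q^T^T *m Q^T = 1%:M by rewrite trmxK.
have hr : Q l i0 * Q l i0 + Q l i1 * Q l i1 + Q l i2 * Q l i2 = 1.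
  by move: (colsq l hQ'); rewrite !mxE.
have [b [hb hb0]] := @unitv (fun j => Q l j) (fun j => tQ l j) hr.
exists a, b, (P a k * Q l b); split.
  by case: ha => /= ->; case: hb => /= ->; rewrite ?mulr1 ?mulrN1 ?opprK; auto.
have -> : delta_mx k l = (delta_mx k 0 : 'cV[R]_3) *m (delta_mx 0 l : 'rV[R]_3) by rewrite mul_delta_mx.
rewrite mulmxA -colE -mulmxA -rowE; apply/matrixP => i j.
rewrite !mxE big_ord1 !mxE.
case: (eqVneq i a) => [->|ia]; case: (eqVneq j b) => [->|jb] /=; rewrite ?mulr1 ?mulr0 //.
- by rewrite (hb0 _ jb) mulr0.
- by rewrite (ha0 _ ia) mul0r.
- by rewrite (ha0 _ ia) mul0r.
Qed.

Lemma mxKK (X Y Z : 'M[R]_3) : Y *m Z = 1%:M -> X *m Y *m Z = X.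
Proof. by move=> h; rewrite -mulmxA h mulmx1. Qed.

Lemma half (G : 'M[R]_3 -> Prop) (A B C D : 'M[R]_3) :
  G = @tetra_group R \/ G = @octa_group R ->
  SO3 A -> SO3 B -> SO3 C -> SO3 D ->
  (forall g, G g -> exists g', G g' /\ A^T *m g *m B = C^T *m g' *m D) ->
  forall k l, exists a b s, (s = 1 \/ s = -1) /\
    A^T *m delta_mx k l *m B = s *: (C^T *m delta_mx a b *m D).
Proof.
move=> hG [hA _] [hB _] [hC _] [hD _] hyp k l.
have hA' := mulmx1C hA; have hB' := mulmx1C hB.
have hC' := mulmx1C hC; have hD' := mulmx1C hD.
have [[G1 [GD0 [GD1 [GD2 GC]]]] GSP] := G_facts hG.
set P := C *m A^T; set Q := B *m D^T.
have hf : forall g, G g -> G (P *m g *m Q).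
  move=> g /hyp [g' [hg' e]].
  have -> : P *m g *m Q = C *m (A^T *m g *m B) *m D^T by rewrite /P /Q !mulmxA.
  by rewrite e !mulmxA hC' mul1mx (mxKK _ hD').
have PtP : P^T *m P = 1%:M.
  by rewrite /P trmx_mul trmxK !mulmxA (mxKK _ hC) hA'.
have QQt : Q *m Q^T = 1%:M.
  by rewrite /Q trmx_mul trmxK !mulmxA (mxKK _ hD) hB'.
have eA : C^T *m P = A^T by rewrite /P mulmxA hC mul1mx.
have eB : Q *m D = B by rewrite /Q -mulmxA hD mulmx1.
clearbody P Q.
have Gh : G (P *m Q) by move: (hf _ G1); rewrite mulmx1.
have PPt := mulmx1C PtP. have QtQ := mulmx1C QQt.
have e1 : forall g, Q^T *m g *m Q = (P *m Q)^T *m (P *m g *m Q).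
  by move=> g; rewrite trmx_mul !mulmxA (mxKK _ PtP).
have e2 : forall g, P^T^T *m g *m P^T = (P *m g *m Q) *m (P *m Q)^T.
  by move=> g; rewrite trmxK trmx_mul !mulmxA (mxKK _ QQt).
have tQ : forall i j, t01 (Q i j).
  apply: K => // i; rewrite e1; apply: E1; apply: GSP => //; exact: hf.
have tP : forall i j, t01 (P i j).
  have : forall j i, t01 (P^T j i).
    apply: K; first by rewrite trmxK.
    1-4: by move=> i; rewrite e2; apply: E2; apply: GSP => //; exact: hf.
  by move=> H i j; move: (H j i); rewrite mxE.
have [a [b [s [hs e]]]] := fin PtP QQt tP tQ k l.
exists a, b, s; split => //.
rewrite -eA -eB.
have -> : C^T *m P *m delta_mx k l *m (Q *m D) = C^T *m (P *m delta_mx k l *m Q) *m D by rewrite !mulmxA.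
by rewrite e -scalemxAr -scalemxAl.
Qed.

End S.

Lemma rowprod (R : realFieldType) (A B : 'M[R]_3) k l :
  (row k A)^T *m row l B = A^T *m delta_mx k l *m B.
Proof.
by rewrite tr_row colE rowE mulmxA -(mulmxA _ (delta_mx k 0)) mul_delta_mx.
Qed.

Lemma flip (R : realFieldType) (M X Y : 'M[R]_3) s : (s = 1 \/ s = -1) -> X = s *: Y ->
  (M = X \/ M = - X) -> (M = Y \/ M = - Y).
Proof.
move=> [->|->] ->; rewrite ?scale1r ?scaleN1r ?opprK; tauto.
Qed.

Unset Implicit Arguments.

Theorem proposition4 (R : realFieldType) (G : 'M[R]_3 -> Prop)
  (Rij Rji Ri Rj : 'M[R]_3) :
  (G = @tetra_group R \/ G = @octa_group R) ->
  SO3 Rij -> SO3 Rji -> SO3 Ri -> SO3 Rj ->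
  (forall M : 'M[R]_3,
     (exists g, G g /\ M = Rij^T *m g *m Rji) <->
     (exists g, G g /\ M = Ri^T *m g *m Rj)) ->
  forall M : 'M[R]_3,
    (exists k l : 'I_3,
        M = Rij^T *m delta_mx k l *m Rji \/ M = - (Rij^T *m delta_mx k l *m Rji)) <->
    (exists k l : 'I_3,
        M = (row k Ri)^T *m row l Rj \/ M = - ((row k Ri)^T *m row l Rj)).
Proof.
move=> hG sij sji si sj hyp M.
have H1 := half hG sij sji si sj (fun g hg =>
  match proj1 (hyp _) (ex_intro _ g (conj hg erefl)) with
  | ex_intro g' (conj a b) => ex_intro _ g' (conj a b) end).
have H2 := half hG si sj sij sji (fun g hg =>
  match proj2 (hyp _) (ex_intro _ g (conj hg erefl)) with
  | ex_intro g' (conj a b) => ex_intro _ g' (conj a b) end).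
split.
- move=> [k [l hM]]; have [a [b [s [hs e]]]] := H1 k l.
  by exists a, b; rewrite rowprod; apply: flip hs e hM.
- move=> [k [l]]; rewrite rowprod => hM; have [a [b [s [hs e]]]] := H2 k l.
  by exists a, b; apply: flip hs e hM.
Qed.
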